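(* Let $\mathcal{A}$ be a strong $T_0$-family. For every $\delta>0$ there is $\varepsilon>0$ such that for every uncountable $(1-\varepsilon)$-separated set $\{x_\alpha:\alpha<\omega_1\}$ contained in the unit sphere of $\mathcal{X}_\mathcal{A}$ there are $\alpha<\beta<\omega_1$ with $\|x_\alpha-x_\beta\|_\mathcal{A}>\sqrt2-\delta$ and there are $\xi<\eta<\omega_1$ with $\|x_\xi-x_\eta\|_\mathcal{A}<1+\delta$.
   Context: A set $\mathcal{Y}$ is $\gamma$-separated if $\|y-y'\|\ge\gamma$ for distinct $y,y'\in\mathcal{Y}$. $c_{00}(\omega_1)$ is the set of finitely supported $x\in\mathbb{R}^{\omega_1}$; $\|x\|_\mathcal{A}=\sup_{A\in\mathcal{A}}\sqrt{\sum_{\alpha\in A}x(\alpha)^2}$ and $\mathcal{X}_\mathcal{A}$ is the closure of $c_{00}(\omega_1)$ in $\{x\in\mathbb{R}^{\omega_1}:\|x\|_\mathcal{A}<\infty\}$. For disjoint $A,B$, $A\otimes B=\{\{\alpha,\beta\}:\alpha\in A,\beta\in B\}$. A function $c=(c_0,c_1):[\omega_1]^2\to I\times J$ ($0,1\in I$, $J\ne\emptyset$) is a $T$-coloring if for every uncountable pairwise disjoint family $\{\{a_\xi(0),a_\xi(1)\}:\xi<\omega_1\}$ of pairs and all $(i_0,j_0),(i_1,j_1)\in I\times J$ there are $\xi<\eta$ with $c(\{a_\xi(0),a_\eta(0)\})=(i_0,j_0)$, $c(\{a_\xi(1),a_\eta(1)\})=(i_1,j_1)$; it is a strong $T$-coloring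 if moreover for every uncountable pairwise disjoint family $\{A_\xi:\xi<\omega_1\}$ of finite subsets of $\omega_1$ there are $\xi<\eta$ with $c_0[A_\xi\otimes A_\eta]=\{0\}$ and $\xi<\eta$ with $c_0[A_\xi\otimes A_\eta]=\{1\}$. A strong $T_0$-family is $\mathcal{A}_c=\{a\subseteq\omega_1\text{ finite}:c_0[[a]^2]\subseteq\{0\}\}$ for a strong $T$-coloring $c$. *)

(* Defs.v *)
From Stdlib Require Import Reals List.
From Coquelicot Require Import Coquelicot.
Open Scope R_scope.

Definition countable_type (A : Type) : Prop :=
  exists f : A -> nat, forall a b, f a = f b -> a = b.

Definition is_omega1 (W : Type) (lt : W -> W -> Prop) : Prop :=
  well_founded lt /\
  (forall a b c, lt a b -> lt b c -> lt a c) /\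
  (forall a b, lt a b \/ a = b \/ lt b a) /\
  ~ countable_type W /\
  (forall a : W, countable_type {b : W | lt b a}).

(** T-coloring c = (c0,c1) : [W]^2 -> I x J (c given as a symmetric
    function on pairs of distinct points; values on the diagonal are
    irrelevant).  [zero] and [one] are the distinguished colors 0,1 in I. *)
Definition symmetric_coloring {W I J : Type} (c : W -> W -> I * J) : Prop :=
  forall a b, a <> b -> c a b = c b a.

Definition disjoint_pair_family {W : Type} (a : W -> W * W) : Prop :=
  (forall xi, fst (a xi) <> snd (a xi)) /\
  (forall xi eta, xi <> eta ->
     forall z, (z = fst (a xi) \/ z = snd (a xi)) ->
               ~ (z = fst (a eta) \/ z = snd (a eta))).

(** An uncountable pairwise disjoint family of (nonempty) finite subsets,
    indexed by omega_1; finite sets are represented by lists. *)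
Definition disjoint_finset_family {W : Type} (A : W -> list W) : Prop :=
  (forall xi, A xi <> nil) /\
  (forall xi eta, xi <> eta -> forall z, In z (A xi) -> ~ In z (A eta)).

Definition T_coloring {W I J : Type} (lt : W -> W -> Prop) (zero one : I)
    (c : W -> W -> I * J) : Prop :=
  zero <> one /\ inhabited J /\ symmetric_coloring c /\
  forall a : W -> W * W, disjoint_pair_family a ->
  forall p0 p1 : I * J, exists xi eta, lt xi eta /\
    c (fst (a xi)) (fst (a eta)) = p0 /\
    c (snd (a xi)) (snd (a eta)) = p1.

Definition c0_const {W I J : Type} (c : W -> W -> I * J) (i : I)
    (A B : list W) : Prop :=
  forall a b, In a A -> In b B -> fst (c a b) = i.

Definition strong_T_coloring {W I J : Type} (lt : W -> W -> Prop)
    (zero one : I) (c : W -> W -> I * J) : Prop :=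
  T_coloring lt zero one c /\
  forall A : W -> list W, disjoint_finset_family A ->
    (exists xi eta, lt xi eta /\ c0_const c zero (A xi) (A eta)) /\
    (exists xi eta, lt xi eta /\ c0_const c one (A xi) (A eta)).

(** The strong T_0-family A_c: finite sets (duplicate-free lists) a with
    c0[[a]^2] included in {0}. *)
Definition in_family {W I J : Type} (zero : I) (c : W -> W -> I * J)
    (a : list W) : Prop :=
  NoDup a /\ forall x y, In x a -> In y a -> x <> y -> fst (c x y) = zero.

Definition sqsum {W : Type} (x : W -> R) (a : list W) : R :=
  fold_right (fun al s => x al ^ 2 + s) 0 a.

Definition normA {W I J : Type} (zero : I) (c : W -> W -> I * J)
    (x : W -> R) : Rbar :=
  Lub_Rbar (fun v => exists a, in_family zero c a /\ v = sqrt (sqsum x a)).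

Definition finitely_supported {W : Type} (y : W -> R) : Prop :=
  exists l : list W, forall al, ~ In al l -> y al = 0.

Definition vsub {W : Type} (x y : W -> R) : W -> R := fun al => x al - y al.

(** X_A: closure of c_00(omega_1) in {x : ||x||_A < oo}. *)
Definition in_XA {W I J : Type} (zero : I) (c : W -> W -> I * J)
    (x : W -> R) : Prop :=
  (exists r : R, normA zero c x = Finite r) /\
  forall e, 0 < e -> exists y, finitely_supported y /\
    Rbar_lt (normA zero c (vsub x y)) (Finite e).

(* Main.v *)
Require Import Defs.
From Stdlib Require Import Reals List.
From Coquelicot Require Import Coquelicot.
From Stdlib Require Import Arith Lia Lra ZArith ClassicalEpsilon Classical FunctionalExtensionality Cantor.
Open Scope R_scope.

Definition cnt {X : Type} (S : X -> Prop) : Prop :=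
  exists f : X -> nat, forall a b, S a -> S b -> f a = f b -> a = b.

Definition pairn (a b : nat) : nat := Cantor.to_nat (a, b).
Lemma pairn_inj a b c d : pairn a b = pairn c d -> a = c /\ b = d.
Proof. intro H. assert (E := f_equal Cantor.of_nat H). unfold pairn in E.
  rewrite !Cantor.cancel_of_to in E. inversion E; auto. Qed.

Lemma cnt_sub {X} (S T : X -> Prop) : (forall x, S x -> T x) -> cnt T -> cnt S.
Proof. intros H [f Hf]. exists f. intros a b Ha Hb. apply Hf; auto. Qed.

Lemma cnt_union {X Y} (C : X -> Prop) (B : X -> Y -> Prop) :
  cnt C -> (forall x, C x -> cnt (B x)) -> cnt (fun y => exists x, C x /\ B x y).
Proof.
  intros [fC HC] HB.
  set (F := fun x => match excluded_middle_informative (cnt (B x)) with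
     | left H => proj1_sig (constructive_indefinite_description _ H)
     | right _ => fun _ => 0%nat end).
  assert (HF : forall x, C x -> forall a b, B x a -> B x b -> F x a = F x b -> a = b).
  { intros x Hx. unfold F. destruct (excluded_middle_informative (cnt (B x))) as [H|H].
    - destruct (constructive_indefinite_description _ H) as [f Hf]. simpl. exact Hf.
    - exfalso; auto. }
  exists (fun y => match excluded_middle_informative (exists x, C x /\ B x y) with
     | left H => pairn (fC (proj1_sig (constructive_indefinite_description _ H)))
                       (F (proj1_sig (constructive_indefinite_description _ H)) y)
     | right _ => 0%nat end).
  intros a b Ha Hb.
  destruct (excluded_middle_informative (exists x, C x /\ B x a)) as [H1|H1]; [|tauto].
  destruct (excluded_middle_informative (exists x, C x /\ B x b)) as [H2|H2]; [|tauto].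
  destruct (constructive_indefinite_description _ H1) as [x1 [Cx1 Bx1]].
  destruct (constructive_indefinite_description _ H2) as [x2 [Cx2 Bx2]].
  simpl. intro E. apply pairn_inj in E. destruct E as [E1 E2].
  assert (x1 = x2) by (apply HC; auto). subst x2.
  apply (HF x1); auto.
Qed.

Lemma cnt_single {X} (a : X) : cnt (fun x => a = x).
Proof. exists (fun _ => 0%nat). intros b c Hb Hc _. congruence. Qed.

Lemma cnt_bool : cnt (fun _ : bool => True).
Proof. exists (fun b : bool => if b then 1%nat else 0%nat). intros [] [] _ _ H; auto; discriminate. Qed.

Lemma cnt_or {X} (S T : X -> Prop) : cnt S -> cnt T -> cnt (fun x => S x \/ T x).
Proof.
  intros HS HT.
  apply (cnt_sub _ (fun y => exists b : bool, True /\ (if b then S else T) y)).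
  - intros x [H|H]; [exists true|exists false]; auto.
  - apply cnt_union. apply cnt_bool. intros []; auto.
Qed.

Lemma cnt_list {X} (l : list X) : cnt (fun x => In x l).
Proof.
  induction l as [|a l IH].
  - exists (fun _ => 0%nat). intros a b [].
  - simpl. apply cnt_or; auto. apply cnt_single.
Qed.

Lemma cnt_image {X Y} (k : X -> Y) : countable_type X -> cnt (fun y => exists x, k x = y).
Proof.
  intros [f Hf].
  apply (cnt_sub _ (fun y => exists x, True /\ k x = y)).
  - intros y [x H]; eauto.
  - apply cnt_union. exists f; auto. intros x _. apply cnt_single.
Qed.

Lemma unc_label {X L} (S : X -> Prop) (lab : X -> L) :
  cnt (fun _ : L => True) -> ~ cnt S -> exists l, ~ cnt (fun x => S x /\ lab x = l).
Proof.
  intros HL HS. apply NNPP. intro HN. apply HS.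
  apply (cnt_sub _ (fun x => exists l, True /\ (fun l x => S x /\ lab x = l) l x)).
  - intros x Hx. exists (lab x). auto.
  - apply cnt_union; auto. intros l _. apply NNPP. intro H. apply HN. eauto.
Qed.

Lemma unc_mono {X} (S T : X -> Prop) : (forall x, S x -> T x) -> ~ cnt S -> ~ cnt T.
Proof. intros H HS HT. apply HS. eapply cnt_sub; eauto. Qed.

Lemma unc_split {X} (S P Q : X -> Prop) : ~ cnt S -> (forall x, S x -> P x \/ Q x) ->
  ~ cnt (fun x => S x /\ P x) \/ ~ cnt (fun x => S x /\ Q x).
Proof.
  intros HS H.
  destruct (unc_label S (fun x => if excluded_middle_informative (P x) then true else false)
    cnt_bool HS) as [[|] Hl].
  - left. eapply unc_mono; [|exact Hl]. simpl. intros x [Sx E].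
    destruct (excluded_middle_informative (P x)); [auto|discriminate].
  - right. eapply unc_mono; [|exact Hl]. simpl. intros x [Sx E].
    destruct (excluded_middle_informative (P x)); [discriminate|].
    destruct (H x Sx); tauto.
Qed.

Lemma unc_two {X} (S : X -> Prop) : ~ cnt S -> exists a b, S a /\ S b /\ a <> b.
Proof.
  intros HS. apply NNPP. intro HN. apply HS. exists (fun _ => 0%nat).
  intros a b Ha Hb _. apply NNPP. intro Hab. apply HN. eauto.
Qed.

Section Om.
Variable W : Type.
Variable lt : W -> W -> Prop.
Hypothesis Hw : is_omega1 W lt.

Lemma unc_W : ~ cnt (fun _ : W => True).
Proof.
  destruct Hw as (_ & _ & _ & H & _). intros [f Hf]. apply H. exists f. intros; apply Hf; auto.
Qed.

Lemma embed (S : W -> Prop) (Good : W -> W -> Prop) :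
  (forall C, cnt C -> exists a, S a /\ ~ C a /\ forall b, C b -> Good b a) ->
  exists g : W -> W, (forall xi, S (g xi)) /\
     (forall xi eta, lt xi eta -> g xi <> g eta /\ Good (g xi) (g eta)).
Proof.
  intros H. destruct Hw as (wf & _ & _ & _ & Hseg).
  set (Img := fun xi (h : forall eta, lt eta xi -> W) (b : W) =>
        exists p : {eta | lt eta xi}, h (proj1_sig p) (proj2_sig p) = b).
  assert (HI : forall xi h, cnt (Img xi h)).
  { intros xi h. apply (cnt_image (fun p : {eta | lt eta xi} => h (proj1_sig p) (proj2_sig p))).
    apply Hseg. }
  set (Fn := fun xi h => proj1_sig (constructive_indefinite_description _ (H (Img xi h) (HI xi h)))).
  assert (HFn : forall xi h, S (Fn xi h) /\ ~ Img xi h (Fn xi h) /\ forall b, Img xi h b -> Good b (Fn xi h)).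
  { intros xi h. unfold Fn. destruct (constructive_indefinite_description _ _) as [a Ha]. exact Ha. }
  set (g := Fix wf (fun _ => W) Fn).
  assert (Hg : forall xi, g xi = Fn xi (fun eta _ => g eta)).
  { intro xi. unfold g. refine (Fix_eq wf (fun _ => W) Fn _ xi). intros x f1 f2 E.
    assert (f1 = f2) as ->.
    { apply functional_extensionality_dep. intro y. apply functional_extensionality_dep. intro p. apply E. }
    reflexivity. }
  exists g. split.
  - intro xi. rewrite Hg. apply HFn.
  - intros xi eta Hl. destruct (HFn eta (fun eta _ => g eta)) as (_ & H2 & H3).
    rewrite <- Hg in H2, H3. split.
    + intro E. apply H2. exists (exist _ xi Hl). simpl. exact E.
    + apply H3. exists (exist _ xi Hl). reflexivity.
Qed.

Lemma trich a b : lt a b \/ a = b \/ lt b a.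
Proof. destruct Hw as (_ & _ & H & _). apply H. Qed.

Lemma embed_inj (S : W -> Prop) : ~ cnt S ->
  exists g : W -> W, (forall xi, S (g xi)) /\ (forall xi eta, xi <> eta -> g xi <> g eta).
Proof.
  intros HS. destruct (embed S (fun _ _ => True)) as [g [H1 H2]].
  - intros C HC. apply NNPP. intro HN. apply HS. eapply cnt_sub; [|exact HC].
    intros x Sx. apply NNPP. intro Cx. apply HN. exists x. auto.
  - exists g. split; auto. intros xi eta Hne.
    destruct (trich xi eta) as [H|[H|H]]; [apply H2; auto|tauto|].
    intro E. symmetry in E. revert E. apply H2; auto.
Qed.

Lemma image_unc (g : W -> W) : (forall xi eta, xi <> eta -> g xi <> g eta) ->
  ~ cnt (fun a => exists xi, g xi = a).
Proof.
  intros Hg [f Hf]. apply unc_W. exists (fun xi => f (g xi)). intros a b _ _ E.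
  apply NNPP. intro Hne. apply (Hg a b Hne). apply Hf; eauto.
Qed.

Definition weq (x y : W) : {x = y} + {x <> y} := excluded_middle_informative (x = y).

Lemma delta_sys : forall n (F : W -> list W) (S : W -> Prop), ~ cnt S ->
  (forall a, S a -> (length (F a) <= n)%nat) ->
  exists R : list W, exists S' : W -> Prop, (forall a, S' a -> S a) /\ ~ cnt S' /\
    forall a b, S' a -> S' b -> a <> b -> forall p, In p (F a) -> In p (F b) -> In p R.
Proof.
  induction n as [|n IH]; intros F S HS Hlen.
  - exists nil, S. split; [auto|split; [auto|]].
    intros a b Sa _ _ p Hp. specialize (Hlen a Sa). destruct (F a); simpl in *; [tauto|lia].
  - destruct (classic (exists p, ~ cnt (fun a => S a /\ In p (F a)))) as [[p Hp]|Hno].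
    + destruct (IH (fun a => remove weq p (F a)) (fun a => S a /\ In p (F a)) Hp) as (R & S' & H1 & H2 & H3).
      { intros a [Sa Ina]. specialize (Hlen a Sa). pose proof (remove_length_lt weq (F a) p Ina). lia. }
      exists (p :: R), S'. split; [intros a Ha; apply H1; auto|split; auto].
      intros a b Sa Sb Hab q Qa Qb. destruct (weq q p) as [->|Hq]; [left; auto|right].
      apply (H3 a b Sa Sb Hab); apply in_in_remove; auto.
    + assert (Hc : forall p, cnt (fun a => S a /\ In p (F a))).
      { intros p. apply NNPP. intro H. apply Hno. eauto. }
      destruct (embed S (fun b a => forall p, In p (F b) -> ~ In p (F a))) as [g [Hg1 Hg2]].
      { intros C HC. apply NNPP. intro HN. apply HS.
        apply (cnt_sub _ (fun a => C a \/ exists b, C b /\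
               (fun b a => exists p, In p (F b) /\ (S a /\ In p (F a))) b a)).
        - intros a Sa. apply NNPP. intro Hn. apply HN. exists a. split; auto. split.
          + intro Ca; apply Hn; auto.
          + intros b Cb p Pb Pa. apply Hn. right. exists b. split; auto. exists p; auto.
        - apply cnt_or; auto. apply cnt_union; auto. intros b _.
          apply cnt_union. apply cnt_list. intros p _. apply Hc. }
      exists nil, (fun a => exists xi, g xi = a). split; [intros a [xi <-]; auto|split].
      * apply image_unc. intros xi eta Hne. destruct (trich xi eta) as [H|[H|H]]; [apply Hg2; auto|tauto|].
        intro E. symmetry in E. revert E. apply Hg2; auto.
      * intros a b [xi <-] [eta <-] Hab p Pa Pb. exfalso.
        destruct (trich xi eta) as [H|[H|H]].
        -- apply (proj2 (Hg2 _ _ H) p Pa Pb).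
        -- subst; tauto.
        -- apply (proj2 (Hg2 _ _ H) p Pb Pa).
Qed.

End Om.

Section SQ.
Variable W : Type.

Lemma sqsum_nonneg (f : W -> R) l : 0 <= sqsum f l.
Proof. induction l; simpl; [lra|]. nra. Qed.

Lemma sqsum_ext (f g : W -> R) l : (forall z, In z l -> f z = g z) -> sqsum f l = sqsum g l.
Proof. induction l; simpl; intros H; auto. rewrite H, IHl; auto. Qed.

Lemma sqsum_mono (f g : W -> R) l : (forall z, In z l -> Rabs (f z) <= Rabs (g z)) ->
  sqsum f l <= sqsum g l.
Proof.
  induction l; simpl; intros H; [lra|].
  assert (f a ^ 2 <= g a ^ 2).
  { rewrite <- (pow2_abs (f a)), <- (pow2_abs (g a)). specialize (H a (or_introl eq_refl)).
    pose proof (Rabs_pos (f a)). nra. }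
  specialize (IHl (fun z Hz => H z (or_intror Hz))). lra.
Qed.

Lemma sqsum_app (f : W -> R) l1 l2 : sqsum f (l1 ++ l2) = sqsum f l1 + sqsum f l2.
Proof. induction l1; simpl; lra. Qed.

Lemma sqsum_filter (f : W -> R) (P : W -> bool) l :
  (forall z, In z l -> P z = false -> f z = 0) -> sqsum f (filter P l) = sqsum f l.
Proof.
  induction l; simpl; intros H; auto.
  destruct (P a) eqn:E; simpl; rewrite IHl; auto.
  rewrite H; auto. simpl. lra.
Qed.

Lemma sqsum_bound (f : W -> R) l h : (forall z, In z l -> Rabs (f z) <= h) ->
  sqsum f l <= INR (length l) * h ^ 2.
Proof.
  induction l; intros H; [simpl; lra|].
  unfold sqsum; cbn [fold_right length]; fold (sqsum f l). rewrite S_INR.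
  assert (f a ^ 2 <= h ^ 2).
  { rewrite <- (pow2_abs (f a)). specialize (H a (or_introl eq_refl)).
    pose proof (Rabs_pos (f a)). nra. }
  specialize (IHl (fun z Hz => H z (or_intror Hz))). lra.
Qed.

Definition dot (f g : W -> R) l := fold_right (fun z s => f z * g z + s) 0 l.

Lemma cs (f g : W -> R) l : (dot f g l) ^ 2 <= sqsum f l * sqsum g l.
Proof.
  induction l; simpl; [lra|].
  pose proof (sqsum_nonneg f l). pose proof (sqsum_nonneg g l).
  set (A := sqsum f l) in *. set (B := sqsum g l) in *. set (C := dot f g l) in *.
  set (x := f a). set (y := g a).
  assert (X : 2 * x * y * C <= x ^ 2 * B + y ^ 2 * A).
  { destruct (Req_dec A 0) as [HA|HA].
    - rewrite HA in IHl. assert (HC2 : C ^ 2 <= 0) by lra. assert (HC : C = 0) by nra. rewrite HC, HA. nra.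
    - assert (A * (x ^ 2 * B + y ^ 2 * A - 2 * x * y * C) >= 0).
      { assert (E : A * (x ^ 2 * B + y ^ 2 * A - 2 * x * y * C) = (x * C - y * A) ^ 2 + x ^ 2 * (A * B - C ^ 2)) by ring.
        assert (0 <= x ^ 2 * (A * B - C ^ 2)) by (apply Rmult_le_pos; nra).
        pose proof (pow2_ge_0 (x * C - y * A)). lra. }
      assert (HA' : 0 < A) by (destruct (Rle_lt_or_eq_dec 0 A H); [auto| congruence]).
      assert (0 <= x ^ 2 * B + y ^ 2 * A - 2 * x * y * C); [|lra].
      apply (Rmult_le_reg_l A); [lra|]. lra. }
  nra.
Qed.

Lemma mink (f g : W -> R) l :
  sqrt (sqsum (fun z => f z + g z) l) <= sqrt (sqsum f l) + sqrt (sqsum g l).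
Proof.
  assert (E : sqsum (fun z => f z + g z) l = sqsum f l + sqsum g l + 2 * dot f g l).
  { induction l; simpl; [lra|]. rewrite IHl. ring. }
  pose proof (sqsum_nonneg f l). pose proof (sqsum_nonneg g l).
  pose proof (cs f g l).
  assert (D : dot f g l <= sqrt (sqsum f l) * sqrt (sqsum g l)).
  { rewrite <- sqrt_mult by auto.
    apply Rle_trans with (Rabs (dot f g l)); [apply Rle_abs|].
    rewrite <- sqrt_Rsqr_abs. apply sqrt_le_1_alt. unfold Rsqr. nra. }
  rewrite E. apply Rsqr_incr_0_var.
  - rewrite Rsqr_sqrt.
    + unfold Rsqr. pose proof (sqrt_sqrt (sqsum f l) H). pose proof (sqrt_sqrt (sqsum g l) H0). nra.
    + pose proof (sqsum_nonneg (fun z => f z + g z) l). lra.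
  - pose proof (sqrt_pos (sqsum f l)). pose proof (sqrt_pos (sqsum g l)). lra.
Qed.

Lemma tri (w u v : W -> R) l : (forall z, In z l -> Rabs (w z) <= Rabs (u z) + Rabs (v z)) ->
  sqrt (sqsum w l) <= sqrt (sqsum u l) + sqrt (sqsum v l).
Proof.
  intros H.
  assert (E1 : forall f, sqsum f l = sqsum (fun z => Rabs (f z)) l).
  { intro f. clear H. induction l; [reflexivity|]. unfold sqsum in *; cbn [fold_right]. rewrite IHl, pow2_abs; auto. }
  apply Rle_trans with (sqrt (sqsum (fun z => Rabs (u z) + Rabs (v z)) l)).
  - apply sqrt_le_1_alt. apply sqsum_mono. intros z Hz.
    rewrite (Rabs_right (Rabs (u z) + Rabs (v z))); auto.
    pose proof (Rabs_pos (u z)); pose proof (Rabs_pos (v z)); lra.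
  - rewrite (E1 u), (E1 v). apply mink.
Qed.

End SQ.

Section NA.
Variables (W I J : Type) (zero : I) (c : W -> W -> I * J).

Lemma nil_fam : in_family zero c nil.
Proof. split. constructor. intros x y []. Qed.

Lemma nA_ge x a : in_family zero c a -> Rbar_le (sqrt (sqsum x a)) (normA zero c x).
Proof. intros H. unfold normA. destruct (Lub_Rbar_correct (fun v => exists a, in_family zero c a /\ v = sqrt (sqsum x a))) as [H1 _].
  apply H1. eauto. Qed.

Lemma nA_le x M : (forall a, in_family zero c a -> sqrt (sqsum x a) <= M) ->
  Rbar_le (normA zero c x) M.
Proof. intros H. unfold normA. destruct (Lub_Rbar_correct (fun v => exists a, in_family zero c a /\ v = sqrt (sqsum x a))) as [_ H2].
  apply H2. intros v [a [Ha ->]]. simpl. auto. Qed.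

Lemma nA_gt x (t : R) : Rbar_lt t (normA zero c x) -> exists a, in_family zero c a /\ t < sqrt (sqsum x a).
Proof.
  intros H. apply NNPP. intro HN.
  assert (Rbar_le (normA zero c x) t).
  { apply nA_le. intros a Ha. apply Rnot_lt_le. intro. apply HN; eauto. }
  eapply Rbar_lt_not_le; eauto.
Qed.

Lemma nA_le_fam x M a : Rbar_le (normA zero c x) (Finite M) -> in_family zero c a -> sqrt (sqsum x a) <= M.
Proof. intros H Ha. pose proof (nA_ge x a Ha). exact (Rbar_le_trans (Finite _) _ (Finite M) H0 H). Qed.

End NA.

Lemma cnt_Z : cnt (fun _ : Z => True).
Proof.
  exists (fun z => pairn (Z.to_nat z) (Z.to_nat (- z))). intros a b _ _ E.
  apply pairn_inj in E. destruct E as [E1 E2]. lia.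
Qed.

Lemma up_close u v : up u = up v -> Rabs (u - v) < 1.
Proof.
  intros E. destruct (archimed u) as [A1 A2]. destruct (archimed v) as [B1 B2].
  rewrite E in A1, A2. apply Rabs_def1; lra.
Qed.

Lemma grid {W : Type} (y : W -> W -> R) (h : R) : 0 < h -> forall (R0 : list W) (S : W -> Prop),
  ~ cnt S -> exists S', (forall a, S' a -> S a) /\ ~ cnt S' /\
   forall a b, S' a -> S' b -> forall g, In g R0 -> Rabs (y a g - y b g) < h.
Proof.
  intros Hh R0. induction R0 as [|g0 R0 IH]; intros S HS.
  - exists S. split; auto. split; auto. intros a b _ _ g [].
  - destruct (IH S HS) as (S1 & H1 & H2 & H3).
    destruct (unc_label S1 (fun a => up (y a g0 / h)) cnt_Z H2) as [k Hk].
    exists (fun a => S1 a /\ up (y a g0 / h) = k). split; [intros a [Ha _]; auto|split; auto].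
    intros a b [Sa Ea] [Sb Eb] g [<-|Hg]; [|apply H3; auto].
    rewrite <- Eb in Ea. apply up_close in Ea.
    replace (y a g0 - y b g0) with (h * (y a g0 / h - y b g0 / h)) by (field; lra).
    rewrite Rabs_mult, Rabs_right by lra. 
    assert (h * Rabs (y a g0 / h - y b g0 / h) < h * 1) by (apply Rmult_lt_compat_l; auto). lra.
Qed.

Lemma sqsum_opp {W} (f : W -> R) l : sqsum (fun z => - f z) l = sqsum f l.
Proof. induction l; simpl; auto. rewrite IHl. ring. Qed.

Lemma sqsum_vsub_sym {W} (u v : W -> R) l : sqsum (vsub u v) l = sqsum (vsub v u) l.
Proof. induction l; simpl; auto. rewrite IHl. unfold vsub. ring. Qed.

Lemma tri3 {W} (w u1 u2 u3 : W -> R) l :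
  (forall z, In z l -> Rabs (w z) <= Rabs (u1 z) + Rabs (u2 z) + Rabs (u3 z)) ->
  sqrt (sqsum w l) <= sqrt (sqsum u1 l) + sqrt (sqsum u2 l) + sqrt (sqsum u3 l).
Proof.
  intros H.
  apply Rle_trans with (sqrt (sqsum u1 l) + sqrt (sqsum (fun z => Rabs (u2 z) + Rabs (u3 z)) l)).
  - apply tri. intros z Hz. rewrite (Rabs_right (Rabs (u2 z) + Rabs (u3 z))).
    + specialize (H z Hz). lra.
    + pose proof (Rabs_pos (u2 z)); pose proof (Rabs_pos (u3 z)); lra.
  - assert (sqrt (sqsum (fun z => Rabs (u2 z) + Rabs (u3 z)) l) <= sqrt (sqsum u2 l) + sqrt (sqsum u3 l)); [|lra].
    apply tri. intros z _. rewrite (Rabs_right (Rabs (u2 z) + Rabs (u3 z))). lra.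
    pose proof (Rabs_pos (u2 z)); pose proof (Rabs_pos (u3 z)); lra.
Qed.

Lemma tri4 {W} (w u1 u2 u3 u4 : W -> R) l :
  (forall z, In z l -> Rabs (w z) <= Rabs (u1 z) + Rabs (u2 z) + Rabs (u3 z) + Rabs (u4 z)) ->
  sqrt (sqsum w l) <= sqrt (sqsum u1 l) + sqrt (sqsum u2 l) + sqrt (sqsum u3 l) + sqrt (sqsum u4 l).
Proof.
  intros H.
  apply Rle_trans with (sqrt (sqsum u1 l) + sqrt (sqsum u2 l) + sqrt (sqsum (fun z => Rabs (u3 z) + Rabs (u4 z)) l)).
  - apply tri3. intros z Hz. rewrite (Rabs_right (Rabs (u3 z) + Rabs (u4 z))).
    + specialize (H z Hz). lra.
    + pose proof (Rabs_pos (u3 z)); pose proof (Rabs_pos (u4 z)); lra.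
  - assert (sqrt (sqsum (fun z => Rabs (u3 z) + Rabs (u4 z)) l) <= sqrt (sqsum u3 l) + sqrt (sqsum u4 l)); [|lra].
    apply tri. intros z _. rewrite (Rabs_right (Rabs (u3 z) + Rabs (u4 z))). lra.
    pose proof (Rabs_pos (u3 z)); pose proof (Rabs_pos (u4 z)); lra.
Qed.

Lemma wf_irr {A} (Rl : A -> A -> Prop) (wf : well_founded Rl) a : ~ Rl a a.
Proof. induction (wf a) as [a _ IH]. intro H. exact (IH a H H). Qed.

Section Main.
Variables (W : Type) (lt : W -> W -> Prop).
Hypothesis Hw : is_omega1 W lt.
Variables (I J : Type) (zero one : I) (c : W -> W -> I * J).
Hypothesis Hc : strong_T_coloring lt zero one c.
Variable d : R.
Hypothesis Hd : 0 < d <= 1.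
Variable x : W -> W -> R.
Hypothesis Hx : forall al, in_XA zero c (x al) /\ normA zero c (x al) = Finite 1.
Hypothesis Hsep : forall al be, al <> be ->
  Rbar_le (Finite (1 - d / 20)) (normA zero c (vsub (x al) (x be))).

Let e1 := d / 20.
Let eta := d / 20.
Let s := d / 4.

Lemma e1_pos : 0 < e1. Proof. unfold e1; lra. Qed.

Definition ysig (a : W) := constructive_indefinite_description _ (proj2 (proj1 (Hx a)) e1 e1_pos).
Definition y (a : W) : W -> R := proj1_sig (ysig a).
Definition Fs (a : W) : list W := proj1_sig (constructive_indefinite_description _ (proj1 (proj2_sig (ysig a)))).

Lemma HF a g : ~ In g (Fs a) -> y a g = 0.
Proof. unfold Fs, y. destruct (ysig a) as [yy [Hf Hn]]. simpl.
  destruct (constructive_indefinite_description _ _) as [l Hl]. simpl. apply Hl. Qed.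

Lemma Hy1 a l : in_family zero c l -> sqrt (sqsum (vsub (x a) (y a)) l) < e1.
Proof. intros Hl. unfold y. destruct (ysig a) as [yy [Hf Hn]]. simpl.
  pose proof (nA_ge _ _ _ zero c (vsub (x a) yy) l Hl).
  pose proof (Rbar_le_lt_trans _ _ (Finite e1) H Hn). exact H0. Qed.

Lemma Hx1 a l : in_family zero c l -> sqrt (sqsum (x a) l) <= 1.
Proof. intros Hl. apply (nA_le_fam _ _ _ zero c). rewrite (proj2 (Hx a)). simpl; lra. auto. Qed.

Definition bIn (l : list W) (g : W) : bool :=
  if excluded_middle_informative (In g l) then true else false.
Lemma bIn_true l g : bIn l g = true <-> In g l.
Proof. unfold bIn. destruct (excluded_middle_informative (In g l)); split; auto; try discriminate; tauto. Qed.
Lemma bIn_false l g : bIn l g = false <-> ~ In g l.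
Proof. unfold bIn. destruct (excluded_middle_informative (In g l)); split; auto; try discriminate; tauto. Qed.

Section Root.
Variable R0 : list W.
Variable S : W -> Prop.
Definition Tl (a : W) : list W := filter (fun g => negb (bIn R0 g)) (Fs a).
Definition zt (a : W) (g : W) : R := if bIn R0 g then 0 else y a g.
Definition rt (a : W) (g : W) : R := if bIn R0 g then y a g else 0.

Lemma Fz a g : zt a g <> 0 -> In g (Tl a).
Proof. unfold zt, Tl. intros H. destruct (bIn R0 g) eqn:E; [lra|].
  apply filter_In. split; [|rewrite E; auto]. apply NNPP. intro Hn. apply H, HF, Hn. Qed.

Lemma Fz0 a g : ~ In g (Tl a) -> zt a g = 0.
Proof. intros H. apply NNPP. intro Hn. apply H, Fz, Hn. Qed.

Lemma Fzy a g : Rabs (zt a g) <= Rabs (y a g).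
Proof. unfold zt. destruct (bIn R0 g); [rewrite Rabs_R0; apply Rabs_pos|lra]. Qed.

Lemma Hz1 a l : in_family zero c l -> sqrt (sqsum (zt a) l) <= 1 + e1.
Proof.
  intros Hl. apply Rle_trans with (sqrt (sqsum (y a) l)).
  - apply sqrt_le_1_alt, sqsum_mono. intros; apply Fzy.
  - pose proof (Hx1 a l Hl). pose proof (Hy1 a l Hl).
    assert (sqrt (sqsum (y a) l) <= sqrt (sqsum (x a) l) + sqrt (sqsum (vsub (x a) (y a)) l)); [|lra].
    apply tri. intros z _. unfold vsub.
    replace (y a z) with (x a z - (x a z - y a z)) at 1 by ring. apply Rabs_triang_inv2 || idtac.
    pose proof (Rabs_triang (x a z) (- (x a z - y a z))). rewrite Rabs_Ropp in H1.
    unfold Rminus at 1. lra.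
Qed.

Hypothesis Hdisj : forall a b, S a -> S b -> a <> b -> forall g, In g (Tl a) -> In g (Tl b) -> False.
Hypothesis Hroot : forall a b l, S a -> S b -> NoDup l -> sqrt (sqsum (fun g => rt a g - rt b g) l) <= eta.

Lemma PU a b M : S a -> S b ->
  (forall l, in_family zero c l -> sqrt (sqsum (zt a) l) <= M) ->
  (forall l, in_family zero c l -> sqrt (sqsum (zt b) l) <= M) ->
  (forall l, in_family zero c l -> (forall g, In g l -> ~ In g (Tl a)) \/ (forall g, In g l -> ~ In g (Tl b))) ->
  forall l, in_family zero c l -> sqrt (sqsum (vsub (x a) (x b)) l) <= 2 * e1 + eta + M.
Proof.
  intros Sa Sb Ha Hb Hab l Hl.
  assert (T : sqrt (sqsum (vsub (x a) (x b)) l) <= sqrt (sqsum (vsub (x a) (y a)) l) +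
     sqrt (sqsum (vsub (x b) (y b)) l) + sqrt (sqsum (fun g => rt a g - rt b g) l) +
     sqrt (sqsum (fun g => zt a g - zt b g) l)).
  { apply tri4. intros z _. unfold vsub.
    replace (x a z - x b z) with ((x a z - y a z) + - (x b z - y b z) + ((rt a z - rt b z) + (zt a z - zt b z))).
    - pose proof (Rabs_triang (x a z - y a z + - (x b z - y b z)) ((rt a z - rt b z) + (zt a z - zt b z))).
      pose proof (Rabs_triang (x a z - y a z) (- (x b z - y b z))).
      pose proof (Rabs_triang (rt a z - rt b z) (zt a z - zt b z)). rewrite Rabs_Ropp in H0. lra.
    - unfold rt, zt. destruct (bIn R0 z); ring. }
  pose proof (Hy1 a l Hl). pose proof (Hy1 b l Hl). pose proof (Hroot a b l Sa Sb (proj1 Hl)).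
  assert (sqrt (sqsum (fun g => zt a g - zt b g) l) <= M); [|lra].
  destruct (Hab l Hl) as [K|K].
  - eapply Rle_trans; [|apply (Hb l Hl)]. apply sqrt_le_1_alt, sqsum_mono. intros z Hz.
    rewrite (Fz0 a z (K z Hz)). rewrite Rminus_0_l, Rabs_Ropp. lra.
  - eapply Rle_trans; [|apply (Ha l Hl)]. apply sqrt_le_1_alt, sqsum_mono. intros z Hz.
    rewrite (Fz0 b z (K z Hz)). rewrite Rminus_0_r. lra.
Qed.

Lemma PO a b : S a -> S b -> a <> b -> c0_const c one (Tl a) (Tl b) -> forall l, in_family zero c l ->
  (forall g, In g l -> ~ In g (Tl a)) \/ (forall g, In g l -> ~ In g (Tl b)).
Proof.
  intros Sa Sb Hab H l Hl. apply NNPP. intro HN. apply not_or_and in HN. destruct HN as [H1 H2].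
  apply not_all_ex_not in H1. destruct H1 as [g1 H1].
  apply not_all_ex_not in H2. destruct H2 as [g2 H2].
  apply imply_to_and in H1. apply imply_to_and in H2.
  destruct H1 as [L1 T1]. destruct H2 as [L2 T2]. apply NNPP in T1. apply NNPP in T2.
  assert (g1 <> g2) by (intro E; subst; apply (Hdisj a b Sa Sb Hab g2); auto).
  pose proof (proj2 Hl g1 g2 L1 L2 H0). pose proof (H g1 g2 T1 T2).
  destruct Hc as [[Hzo _] _]. congruence.
Qed.

Lemma sqrt2_lt2 : sqrt 2 < 2.
Proof. apply Rlt_le_trans with (sqrt (2 * 2)).
  - apply sqrt_lt_1_alt. lra.
  - rewrite sqrt_square; lra. Qed.

Lemma PL a b la lb : S a -> S b -> a <> b -> c0_const c zero (Tl a) (Tl b) ->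
  in_family zero c la -> in_family zero c lb ->
  1 - s < sqrt (sqsum (zt a) la) -> 1 - s < sqrt (sqsum (zt b) lb) ->
  exists l, in_family zero c l /\ sqrt 2 - d < sqrt (sqsum (vsub (x a) (x b)) l).
Proof.
  intros Sa Sb Hab H0 Ha Hb Ga Gb.
  set (l := filter (bIn (Tl a)) la ++ filter (bIn (Tl b)) lb).
  assert (Hl : in_family zero c l).
  { split.
    - apply NoDup_app; try apply NoDup_filter; try apply Ha; try apply Hb.
      intros g G1 G2. apply filter_In in G1. apply filter_In in G2.
      destruct G1 as [_ G1]; destruct G2 as [_ G2].
      apply bIn_true in G1. apply bIn_true in G2. apply (Hdisj a b Sa Sb Hab g); tauto.
    - intros g1 g2 G1 G2 Hne. unfold l in G1, G2. apply in_app_or in G1. apply in_app_or in G2.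
      destruct G1 as [G1|G1]; destruct G2 as [G2|G2]; apply filter_In in G1; apply filter_In in G2;
      destruct G1 as [G1 B1]; destruct G2 as [G2 B2]; apply bIn_true in B1; apply bIn_true in B2.
      + apply (proj2 Ha); auto.
      + apply H0; auto.
      + destruct Hc as [[_ [_ [Hsym _]]] _]. rewrite Hsym by auto. apply H0; auto.
      + apply (proj2 Hb); auto. }
  exists l. split; auto.
  assert (E : sqsum (fun g => zt a g - zt b g) l = sqsum (zt a) la + sqsum (zt b) lb).
  { unfold l. rewrite sqsum_app. f_equal.
    - rewrite (sqsum_ext _ _ (zt a)).
      + apply sqsum_filter. intros g _ B. apply Fz0. apply bIn_false; auto.
      + intros g G. apply filter_In in G. destruct G as [_ G]. apply bIn_true in G.
        rewrite (Fz0 b g); [ring|]. intro G'. apply (Hdisj a b Sa Sb Hab g); auto.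
    - rewrite (sqsum_ext _ _ (fun g => - zt b g)).
      + rewrite sqsum_opp. apply sqsum_filter. intros g _ B. apply Fz0. apply bIn_false; auto.
      + intros g G. apply filter_In in G. destruct G as [_ G]. apply bIn_true in G.
        rewrite (Fz0 a g); [ring|]. intro G'. apply (Hdisj a b Sa Sb Hab g); auto. }
  assert (T : sqrt (sqsum (fun g => zt a g - zt b g) l) <= sqrt (sqsum (vsub (x a) (y a)) l) +
     sqrt (sqsum (vsub (x b) (y b)) l) + sqrt (sqsum (vsub (x a) (x b)) l)).
  { apply tri3. intros z _. unfold vsub.
    apply Rle_trans with (Rabs (y a z - y b z)).
    - unfold zt. destruct (bIn R0 z). rewrite Rminus_0_r, Rabs_R0. apply Rabs_pos. lra.
    - replace (y a z - y b z) with (- (x a z - y a z) + (x b z - y b z) + (x a z - x b z)) by ring.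
      pose proof (Rabs_triang (- (x a z - y a z) + (x b z - y b z)) (x a z - x b z)).
      pose proof (Rabs_triang (- (x a z - y a z)) (x b z - y b z)). rewrite Rabs_Ropp in H1. lra. }
  pose proof (Hy1 a l Hl). pose proof (Hy1 b l Hl).
  assert (Hs : 0 <= 1 - s) by (unfold s; lra).
  assert (Q1 : (1 - s) ^ 2 < sqsum (zt a) la).
  { pose proof (sqsum_nonneg _ (zt a) la). rewrite <- (sqrt_sqrt (sqsum (zt a) la)) by auto. nra. }
  assert (Q2 : (1 - s) ^ 2 < sqsum (zt b) lb).
  { pose proof (sqsum_nonneg _ (zt b) lb). rewrite <- (sqrt_sqrt (sqsum (zt b) lb)) by auto. nra. }
  assert (Q : sqrt 2 * (1 - s) < sqrt (sqsum (fun g => zt a g - zt b g) l)).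
  { rewrite E. rewrite <- (sqrt_pow2 (1 - s)) by auto. rewrite <- sqrt_mult by (try lra; apply pow2_ge_0).
    apply sqrt_lt_1_alt. pose proof (pow2_ge_0 (1 - s)). lra. }
  pose proof sqrt2_lt2. unfold s, e1 in *. nra.
Qed.

End Root.

Lemma sym_le u v M : (forall l, in_family zero c l -> sqrt (sqsum (vsub u v) l) <= M) ->
  Rbar_le (normA zero c (vsub v u)) (Finite M).
Proof. intros H. apply nA_le. intros l Hl. rewrite sqsum_vsub_sym. auto. Qed.

Lemma main_aux :
    (exists al be, lt al be /\
       Rbar_lt (Finite (sqrt 2 - d)) (normA zero c (vsub (x al) (x be)))) /\
    (exists xi eta, lt xi eta /\
       Rbar_lt (normA zero c (vsub (x xi) (x eta))) (Finite (1 + d))).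
Proof.
  assert (cnt_nat : cnt (fun _ : nat => True)) by (exists (fun n => n); auto).
  destruct (unc_label (fun _ => True) (fun a => length (Fs a)) cnt_nat (unc_W W lt Hw)) as [n0 Hn0].
  destruct (delta_sys W lt Hw n0 Fs _ Hn0) as (R0 & S1 & HS1 & US1 & HD).
  { intros a [_ E]. lia. }
  set (h := eta / (INR (length R0) + 1)).
  assert (HK : 0 <= INR (length R0)) by apply pos_INR.
  assert (Hh : 0 < h) by (unfold h, eta; apply Rdiv_lt_0_compat; lra).
  destruct (grid y h Hh R0 S1 US1) as (S2 & HS2 & US2 & HG).
  assert (Hdisj : forall a b, S2 a -> S2 b -> a <> b -> forall g, In g (Tl R0 a) -> In g (Tl R0 b) -> False).
  { intros a b Sa Sb Hab g Ga Gb. unfold Tl in Ga, Gb. apply filter_In in Ga. apply filter_In in Gb.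
    destruct Ga as [Ga Ba]. destruct Gb as [Gb _].
    pose proof (HD a b (HS2 a Sa) (HS2 b Sb) Hab g Ga Gb).
    apply bIn_true in H. rewrite H in Ba. discriminate. }
  assert (Hroot : forall a b l, S2 a -> S2 b -> NoDup l -> sqrt (sqsum (fun g => rt R0 a g - rt R0 b g) l) <= eta).
  { intros a b l Sa Sb Hl.
    rewrite <- (sqsum_filter _ _ (bIn R0)).
    2: { intros g _ B. unfold rt. rewrite B. ring. }
    assert (B1 : sqsum (fun g => rt R0 a g - rt R0 b g) (filter (bIn R0) l) <= INR (length (filter (bIn R0) l)) * h ^ 2).
    { apply sqsum_bound. intros g G. apply filter_In in G. destruct G as [_ G].
      unfold rt. rewrite G. apply bIn_true in G. left. apply HG; auto. }
    assert (B2 : (length (filter (bIn R0) l) <= length R0)%nat).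
    { apply NoDup_incl_length. apply NoDup_filter; auto. intros g G. apply filter_In in G.
      apply bIn_true. tauto. }
    apply le_INR in B2.
    assert (B3 : INR (length R0) * h ^ 2 <= eta ^ 2).
    { assert (E : h * (INR (length R0) + 1) = eta) by (unfold h; field; lra).
      rewrite <- E. assert (0 <= h ^ 2) by apply pow2_ge_0. nra. }
    assert (0 <= h ^ 2) by apply pow2_ge_0.
    rewrite <- (sqrt_pow2 eta) by (unfold eta; lra). apply sqrt_le_1_alt. nra. }
  set (Big := fun a => exists l, in_family zero c l /\ 1 - s < sqrt (sqsum (zt R0 a) l)).
  set (NotBig := fun a => forall l, in_family zero c l -> sqrt (sqsum (zt R0 a) l) <= 1 - s).
  assert (contra : forall a b, S2 a -> S2 b -> a <> b -> NotBig a -> NotBig b ->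
     (forall l, in_family zero c l -> (forall g, In g l -> ~ In g (Tl R0 a)) \/ (forall g, In g l -> ~ In g (Tl R0 b))) -> False).
  { intros a b Sa Sb Hab Na Nb Hav.
    pose proof (PU R0 S2 Hroot a b (1 - s) Sa Sb Na Nb Hav) as P.
    pose proof (nA_le _ _ _ zero c _ _ P) as P2. pose proof (Hsep a b Hab) as P3.
    pose proof (Rbar_le_trans (Finite _) _ (Finite _) P3 P2). simpl in H. unfold e1, eta, s in H. lra. }
  assert (Hfam : forall g : W -> W, (forall xi, S2 (g xi)) -> (forall xi eta, xi <> eta -> g xi <> g eta) ->
      (forall xi, Tl R0 (g xi) <> nil) -> disjoint_finset_family (fun xi => Tl R0 (g xi))).
  { intros g HgS Hgi Hne. split; auto. intros xi et Hne' z Z1 Z2.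
    apply (Hdisj (g xi) (g et) (HgS xi) (HgS et) (Hgi _ _ Hne') z); auto. }
  destruct Hc as [HT Hstrong].
  destruct (unc_split S2 Big NotBig US2) as [UB|UN].
  { intros a _. destruct (classic (Big a)) as [|HN]; [auto|right]. intros l Hl.
    apply Rnot_lt_le. intro. apply HN. exists l. auto. }
  2: { exfalso.
       destruct (unc_split _ (fun a => Tl R0 a = nil) (fun a => Tl R0 a <> nil) UN) as [U1|U2].
       { intros a _. apply classic. }
       - destruct (unc_two _ U1) as (a & b & [[Sa Na] Ea] & [[Sb Nb] Eb] & Hab).
         apply (contra a b Sa Sb Hab Na Nb). intros l _. left. intros g _. rewrite Ea. simpl; auto.
       - destruct (embed_inj W lt Hw _ U2) as [g [HgS Hgi]].
         destruct (Hstrong _ (Hfam g (fun xi => proj1 (proj1 (HgS xi))) Hgi (fun xi => proj2 (HgS xi))))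
           as [_ (xi & et & Hl & Hone)].
         assert (Hne : g xi <> g et).
         { apply Hgi. intro E. subst. destruct Hw as [wf _]. apply (wf_irr _ wf et Hl). }
         destruct (HgS xi) as [[Sa Na] _]. destruct (HgS et) as [[Sb Nb] _].
         apply (contra _ _ Sa Sb Hne Na Nb). apply (PO R0 S2 Hdisj); auto. }
  destruct (embed_inj W lt Hw _ UB) as [g [HgS Hgi]].
  assert (Hne0 : forall xi, Tl R0 (g xi) <> nil).
  { intros xi E. destruct (HgS xi) as [_ [l [Hl Hb]]].
    assert (sqsum (zt R0 (g xi)) l <= INR (length l) * 0 ^ 2).
    { apply sqsum_bound. intros z _. rewrite Fz0. rewrite Rabs_R0; simpl; lra. rewrite E. simpl; auto. }
    assert (sqsum (zt R0 (g xi)) l <= 0) by (simpl in H; lra).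
    pose proof (sqsum_nonneg _ (zt R0 (g xi)) l).
    assert (sqsum (zt R0 (g xi)) l = 0) by lra. rewrite H2, sqrt_0 in Hb. unfold s in Hb. lra. }
  destruct (Hstrong _ (Hfam g (fun xi => proj1 (HgS xi)) Hgi Hne0))
    as [(xi & et & Hl & Hzero) (xi' & et' & Hl' & Hone)].
  assert (irr : forall a, ~ lt a a).
  { intros a H. destruct Hw as [wf _]. apply (wf_irr _ wf a H). }
  split.
  - assert (Hne : g xi <> g et) by (apply Hgi; intro E; subst; apply (irr et); auto).
    destruct (HgS xi) as [Sa [la [Ha Ga]]]. destruct (HgS et) as [Sb [lb [Hb Gb]]].
    destruct (PL R0 S2 Hdisj _ _ la lb Sa Sb Hne Hzero Ha Hb Ga Gb) as [l [Hl0 Hv]].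
    destruct (trich W lt Hw (g xi) (g et)) as [L|[L|L]].
    + exists (g xi), (g et). split; auto.
      eapply Rbar_lt_le_trans; [|apply (nA_ge _ _ _ zero c _ l Hl0)]. exact Hv.
    + tauto.
    + exists (g et), (g xi). split; auto.
      eapply Rbar_lt_le_trans; [|apply (nA_ge _ _ _ zero c _ l Hl0)]. rewrite sqsum_vsub_sym. exact Hv.
  - assert (Hne : g xi' <> g et') by (apply Hgi; intro E; subst; apply (irr et'); auto).
    destruct (HgS xi') as [Sa _]. destruct (HgS et') as [Sb _].
    pose proof (PU R0 S2 Hroot _ _ (1 + e1) Sa Sb (Hz1 R0 _) (Hz1 R0 _) (PO R0 S2 Hdisj _ _ Sa Sb Hne Hone)) as P.
    assert (Hlt : 2 * e1 + eta + (1 + e1) < 1 + d) by (unfold e1, eta; lra).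
    destruct (trich W lt Hw (g xi') (g et')) as [L|[L|L]].
    + exists (g xi'), (g et'). split; auto.
      eapply Rbar_le_lt_trans; [apply (nA_le _ _ _ zero c _ _ P)|]. exact Hlt.
    + tauto.
    + exists (g et'), (g xi'). split; auto.
      eapply Rbar_le_lt_trans; [apply (sym_le _ _ _ P)|]. exact Hlt.
Qed.

End Main.

Theorem proposition4p2 :
  forall (W : Type) (lt : W -> W -> Prop), is_omega1 W lt ->
  forall (I J : Type) (zero one : I) (c : W -> W -> I * J),
  strong_T_coloring lt zero one c ->
  forall delta : R, 0 < delta ->
  exists eps : R, 0 < eps /\
  forall x : W -> (W -> R),
    (forall al be, al <> be -> x al <> x be) ->
    (forall al, in_XA zero c (x al) /\ normA zero c (x al) = Finite 1) ->
    (forall al be, al <> be ->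
       Rbar_le (Finite (1 - eps)) (normA zero c (vsub (x al) (x be)))) ->
    (exists al be, lt al be /\
       Rbar_lt (Finite (sqrt 2 - delta)) (normA zero c (vsub (x al) (x be)))) /\
    (exists xi eta, lt xi eta /\
       Rbar_lt (normA zero c (vsub (x xi) (x eta))) (Finite (1 + delta))).
Proof.
  intros W lt Hw I J zero one c Hc delta Hdelta.
  set (d := Rmin delta 1).
  assert (Hd : 0 < d <= 1) by (unfold d; split; [apply Rmin_glb_lt; lra|apply Rmin_r]).
  assert (Hdd : d <= delta) by apply Rmin_l.
  exists (d / 20). split; [lra|].
  intros x _ Hx Hsep.
  destruct (main_aux W lt Hw I J zero one c Hc d Hd x Hx Hsep) as
    [(al & be & H1 & H2) (xi & et & H3 & H4)].
  split.
  - exists al, be. split; auto.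
    eapply Rbar_le_lt_trans; [|exact H2]. simpl. lra.
  - exists xi, et. split; auto.
    eapply Rbar_lt_le_trans; [exact H4|]. simpl. lra.
Qed.
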